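(* Let $w_1, w_2 \geq 0$ with $w_1 + w_2 > 0$. Both for the class of sequential two-player weighted congestion games with affine costs, proportional cost functions and player weights $w_1,w_2$ (player 1 moving first), and for its subclass of network routing games, the price of anarchy (with respect to subgame-perfect equilibria) is equal to \[ 1 + \frac{w_1w_2}{w_1^2 + w_2^2}. \]
   Context: A weighted two-player congestion game with affine costs consists of a finite set $R$ of resources, coefficients $\alpha_r,\beta_r \geq 0$ for each $r\in R$, two players $i=1,2$ with weights $w_i\ge 0$, and for each player $i$ a nonempty finite set $\mathcal{A}_i \subseteq 2^R$ of actions. For an action profile $A=(A_1,A_2)$ the load of $r$ is $x_r(A)=\sum_{j:\, r\in A_j} w_j$. With proportional costs, player $i$ pays $C_i(A)=w_i\sum_{r\in A_i}(\alpha_r+\beta_r x_r(A))$. The social cost is $C(A)=C_1(A)+C_2(A)$. In a network routing game, $R$ is the arc set of a directed graph, player $i$ has a source $s_i$ and sink $t_i$, and $\mathcal{A}_i$ is the set of arc sets of directed $s_i$–$t_i$ paths. In the sequential game, player 1 (weight $w_1$) chooses $A_1$ first, then player 2 (weight $w_2$), knowing $A_1$, chooses $A_2$. A subgame-perfect equilibrium consists of a function $A_1\mapsto A_2^*(A_1)$ with $C_2(A_1,A_2^*(A_1))\le C_2(A_1,A_2)$ for all $A_1,A_2$, and an action $A_1^*$ with $C_1(A_1^*,A_2^*(A_1^* ))\le C_1(A_1,A_2^*(A_1))$ for all $A_1$; its outcome is $(A_1^*,A_2^*(A_1^* ))$. The price of anarchy of an instance is the maximum over subgame-perfect equilibrium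 outcomes $A$ of $C(A)/\min_{A'}C(A')$; the price of anarchy of a class is the supremum over all instances (with positive optimal social cost). *)

(* Defs.v *)
From HB Require Import structures.
From mathcomp Require Import all_boot all_order all_algebra.
From mathcomp Require Import reals.
Set Implicit Arguments. Unset Strict Implicit. Unset Printing Implicit Defensive.
Import Order.TTheory GRing.Theory Num.Theory.
Local Open Scope ring_scope.

Section CongestionGames.
Variables (R : realType) (T : finType).
Variables (alpha beta : T -> R) (w1 w2 : R).

Definition load (A1 A2 : {set T}) (r : T) : R :=
  (if r \in A1 then w1 else 0) + (if r \in A2 then w2 else 0).

Definition cost1 (A1 A2 : {set T}) : R :=
  w1 * \sum_(r in A1) (alpha r + beta r * load A1 A2 r).
Definition cost2 (A1 A2 : {set T}) : R :=
  w2 * \sum_(r in A2) (alpha r + beta r * load A1 A2 r).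
Definition social_cost (A1 A2 : {set T}) : R := cost1 A1 A2 + cost2 A1 A2.

Variables (Acts1 Acts2 : {set {set T}}).

Definition wf_game : Prop :=
  (forall r, 0 <= alpha r /\ 0 <= beta r) /\
  Acts1 != set0 /\ Acts2 != set0.

Definition spe_outcome (B1 B2 : {set T}) : Prop :=
  exists f : {set T} -> {set T},
    (forall A1, A1 \in Acts1 -> f A1 \in Acts2) /\
    (forall A1 A2, A1 \in Acts1 -> A2 \in Acts2 ->
        cost2 A1 (f A1) <= cost2 A1 A2) /\
    B1 \in Acts1 /\
    (forall A1, A1 \in Acts1 -> cost1 B1 (f B1) <= cost1 A1 (f A1)) /\
    B2 = f B1.

Definition is_opt (m : R) : Prop :=
  (exists A1 A2, A1 \in Acts1 /\ A2 \in Acts2 /\ social_cost A1 A2 = m) /\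
  (forall A1 A2, A1 \in Acts1 -> A2 \in Acts2 -> m <= social_cost A1 A2).

Definition instance_poa (r : R) : Prop :=
  exists m, is_opt m /\ 0 < m /\
    (exists B1 B2, spe_outcome B1 B2 /\ r = social_cost B1 B2 / m) /\
    (forall B1 B2, spe_outcome B1 B2 -> social_cost B1 B2 / m <= r).

End CongestionGames.

(* network routing games: resources are the arcs of a directed (multi)graph
   on vertex set V given by tail/head maps *)
Section Network.
Variables (T V : finType) (tl hd : T -> V).

Fixpoint walk_from (v t : V) (p : seq T) : bool :=
  match p with
  | [::] => v == t
  | e :: p' => (tl e == v) && walk_from (hd e) t p'
  end.

Definition st_path (s t : V) (p : seq T) : bool :=
  walk_from s t p && uniq (s :: map hd p).

Definition path_action_set (s t : V) (Acts : {set {set T}}) : Prop :=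
  forall P : {set T},
    P \in Acts <-> exists p : seq T, st_path s t p /\ P = [set e in p].
End Network.

Definition is_network_game (T : finType) (Acts1 Acts2 : {set {set T}}) : Prop :=
  exists (V : finType) (tl hd : T -> V) (s1 t1 s2 t2 : V),
    path_action_set tl hd s1 t1 Acts1 /\ path_action_set tl hd s2 t2 Acts2.

Definition poa_values (R : realType) (w1 w2 : R) (network : bool) (r : R) : Prop :=
  exists (T : finType) (alpha beta : T -> R) (Acts1 Acts2 : {set {set T}}),
    wf_game alpha beta Acts1 Acts2 /\
    (network -> is_network_game Acts1 Acts2) /\
    instance_poa alpha beta w1 w2 Acts1 Acts2 r.

Definition is_sup (R : realType) (S : R -> Prop) (x : R) : Prop :=
  (forall y, S y -> y <= x) /\
  (forall z, (forall y, S y -> y <= z) -> x <= z).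

(* Main.v *)
Require Import Defs.
From HB Require Import structures.
From mathcomp Require Import all_boot all_order all_algebra.
From mathcomp Require Import reals.
From mathcomp Require Import ring lra.
Import Order.TTheory GRing.Theory Num.Theory.
Local Open Scope ring_scope.

Definition c1 {R : realType} {T : finType} (alpha beta : T -> R) (w1 w2 : R)
  (A1 A2 : {set T}) (r : T) : R :=
  if r \in A1 then w1 * (alpha r + beta r * load w1 w2 A1 A2 r) else 0.
Definition c2 {R : realType} {T : finType} (alpha beta : T -> R) (w1 w2 : R)
  (A1 A2 : {set T}) (r : T) : R :=
  if r \in A2 then w2 * (alpha r + beta r * load w1 w2 A1 A2 r) else 0.

Lemma cost1E (R : realType) (T : finType) (alpha beta : T -> R) (w1 w2 : R) A1 A2 :
  cost1 alpha beta w1 w2 A1 A2 = \sum_r c1 alpha beta w1 w2 A1 A2 r.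
Proof.
rewrite /cost1 big_mkcond mulr_sumr; apply: eq_bigr => r _.
by rewrite /c1; case: ifP => _; rewrite ?mulr0.
Qed.

Lemma cost2E (R : realType) (T : finType) (alpha beta : T -> R) (w1 w2 : R) A1 A2 :
  cost2 alpha beta w1 w2 A1 A2 = \sum_r c2 alpha beta w1 w2 A1 A2 r.
Proof.
rewrite /cost2 big_mkcond mulr_sumr; apply: eq_bigr => r _.
by rewrite /c2; case: ifP => _; rewrite ?mulr0.
Qed.

Lemma perres (R : realType) (T : finType) (alpha beta : T -> R) (w1 w2 : R)
  (B1 B2 O1 O2 F : {set T}) r :
  0 <= w1 -> 0 <= w2 -> 0 <= alpha r -> 0 <= beta r ->
  - (w1 * w2) * c1 alpha beta w1 w2 B1 B2 r
  + (w1^+2 + w2^+2) * c2 alpha beta w1 w2 B1 F r +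
  (w1^+2 + w2^+2 + w1 * w2) * (c1 alpha beta w1 w2 O1 F r
     - c1 alpha beta w1 w2 O1 O2 r - c2 alpha beta w1 w2 O1 F r) <= 0.
Proof.
move=> h1 h2 ha hb.
rewrite /c1 /c2 /load.
move: (alpha r) (beta r) ha hb => a b ha hb.
have m1 : 0 <= a * (w1 * w1 * w2) by rewrite !mulr_ge0.
have m2 : 0 <= a * (w1 * w2 * w2) by rewrite !mulr_ge0.
have m3 : 0 <= b * (w1 * w1 * w1 * w2) by rewrite !mulr_ge0.
have m4 : 0 <= b * (w1 * w1 * w2 * w2) by rewrite !mulr_ge0.
have m5 : 0 <= b * (w1 * w2 * w2 * w2) by rewrite !mulr_ge0.
case: (r \in B1); case: (r \in B2); case: (r \in O1);
  case: (r \in O2); case: (r \in F) => /=; lra.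
Qed.

Lemma spe_bound (R : realType) (T : finType) (alpha beta : T -> R) (w1 w2 : R)
  (Acts1 Acts2 : {set {set T}}) (B1 B2 O1 O2 : {set T}) :
  0 <= w1 -> 0 <= w2 -> (forall r, 0 <= alpha r /\ 0 <= beta r) ->
  spe_outcome alpha beta w1 w2 Acts1 Acts2 B1 B2 -> O1 \in Acts1 -> O2 \in Acts2 ->
  (w1^+2 + w2^+2) * social_cost alpha beta w1 w2 B1 B2 <=
  (w1^+2 + w2^+2 + w1 * w2) * social_cost alpha beta w1 w2 O1 O2.
Proof.
move=> h1 h2 hab [f [hf [hbr [hB1 [hopt ->]]]]] hO1 hO2.
set F := f O1.
have I1 := hopt O1 hO1.
have I3 := hbr O1 O2 hO1 hO2.
have I4 := hbr B1 F hB1 (hf O1 hO1).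
have S : \sum_r (- (w1 * w2) * c1 alpha beta w1 w2 B1 (f B1) r
  + (w1^+2 + w2^+2) * c2 alpha beta w1 w2 B1 F r +
  (w1^+2 + w2^+2 + w1 * w2) * (c1 alpha beta w1 w2 O1 F r
     - c1 alpha beta w1 w2 O1 O2 r - c2 alpha beta w1 w2 O1 F r)) <= 0.
  apply: sumr_le0 => r _; have [ha hb] := hab r; exact: perres.
have SE : \sum_r (- (w1 * w2) * c1 alpha beta w1 w2 B1 (f B1) r
  + (w1^+2 + w2^+2) * c2 alpha beta w1 w2 B1 F r +
  (w1^+2 + w2^+2 + w1 * w2) * (c1 alpha beta w1 w2 O1 F r
     - c1 alpha beta w1 w2 O1 O2 r - c2 alpha beta w1 w2 O1 F r)) =
  - (w1 * w2) * cost1 alpha beta w1 w2 B1 (f B1)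
  + (w1^+2 + w2^+2) * cost2 alpha beta w1 w2 B1 F +
  (w1^+2 + w2^+2 + w1 * w2) * (cost1 alpha beta w1 w2 O1 F
     - cost1 alpha beta w1 w2 O1 O2 - cost2 alpha beta w1 w2 O1 F).
  by rewrite !cost1E !cost2E -!sumrB !mulr_sumr -!big_split.
have D0 : 0 <= w1^+2 + w2^+2 by rewrite addr_ge0 // exprn_ge0.
have DP0 : 0 <= w1^+2 + w2^+2 + w1 * w2 by rewrite addr_ge0 // mulr_ge0.
have J1 := ler_wpM2l DP0 I1.
have J3 := ler_wpM2l DP0 I3.
have J4 := ler_wpM2l D0 I4.
rewrite /social_cost.
lra.
Qed.

Definition a0 : 'I_5 := @Ordinal 5 0 isT.
Definition a1 : 'I_5 := @Ordinal 5 1 isT.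
Definition a2 : 'I_5 := @Ordinal 5 2 isT.
Definition a3 : 'I_5 := @Ordinal 5 3 isT.
Definition a4 : 'I_5 := @Ordinal 5 4 isT.
Definition alp {R : realType} (w1 w2 : R) (e : 'I_5) : R :=
  match val e with 0 => w1 | 4 => w1 + w2 | _ => 0 end.
Definition bet {R : realType} (e : 'I_5) : R :=
  match val e with 2 => 1 | _ => 0 end.
Definition X1 : {set 'I_5} := [set a1; a2].
Definition X2 : {set 'I_5} := [set a4].
Definition Y1 : {set 'I_5} := [set a0].
Definition Y2 : {set 'I_5} := [set a2; a3].

Ltac cst := rewrite /social_cost /cost1 /cost2 !big_mkcond /= !big_ord_recl !big_ord0 /load /X1 /X2 /Y1 /Y2 !inE /alp /bet /=; ring.
Lemma c11 (R : realType) (w1 w2 : R) : cost1 (alp w1 w2) bet w1 w2 X1 X2 = w1 ^+ 2. Proof. cst. Qed.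
Lemma c12 (R : realType) (w1 w2 : R) : cost2 (alp w1 w2) bet w1 w2 X1 X2 = w2 * (w1 + w2). Proof. cst. Qed.
Lemma c13 (R : realType) (w1 w2 : R) : cost1 (alp w1 w2) bet w1 w2 X1 Y2 = w1 * (w1 + w2). Proof. cst. Qed.
Lemma c14 (R : realType) (w1 w2 : R) : cost2 (alp w1 w2) bet w1 w2 X1 Y2 = w2 * (w1 + w2). Proof. cst. Qed.
Lemma c15 (R : realType) (w1 w2 : R) : cost1 (alp w1 w2) bet w1 w2 Y1 X2 = w1 ^+ 2. Proof. cst. Qed.
Lemma c16 (R : realType) (w1 w2 : R) : cost2 (alp w1 w2) bet w1 w2 Y1 X2 = w2 * (w1 + w2). Proof. cst. Qed.
Lemma c17 (R : realType) (w1 w2 : R) : cost1 (alp w1 w2) bet w1 w2 Y1 Y2 = w1 ^+ 2. Proof. cst. Qed.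
Lemma c18 (R : realType) (w1 w2 : R) : cost2 (alp w1 w2) bet w1 w2 Y1 Y2 = w2 ^+ 2. Proof. cst. Qed.

Definition v0 : 'I_4 := @Ordinal 4 0 isT.
Definition v1 : 'I_4 := @Ordinal 4 1 isT.
Definition v2 : 'I_4 := @Ordinal 4 2 isT.
Definition v3 : 'I_4 := @Ordinal 4 3 isT.
Definition tl0 (e : 'I_5) : 'I_4 :=
  match val e with 0 => v0 | 1 => v0 | 2 => v1 | 3 => v2 | _ => v1 end.
Definition hd0 (e : 'I_5) : 'I_4 :=
  match val e with 0 => v2 | 1 => v1 | 2 => v2 | _ => v3 end.

Lemma Wzy p : walk_from tl0 hd0 v3 v2 p = false.
Proof. case: p => [|e p] //=; by case: e => [[|[|[|[|[|k]]]]] He]. Qed.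
Lemma Wyy p : walk_from tl0 hd0 v2 v2 p -> p = [::].
Proof.
case: p => [|e p] //=; case: e => [[|[|[|[|[|k]]]]] He] //=.
by rewrite Wzy.
Qed.
Lemma Wxy p : walk_from tl0 hd0 v1 v2 p -> p = [:: a2].
Proof.
case: p => [|e p] //=; case: e => [[|[|[|[|[|k]]]]] He] //=.
  by move/Wyy => ->; apply/eqP.
by rewrite Wzy.
Qed.
Lemma Wwy p : walk_from tl0 hd0 v0 v2 p -> p = [:: a0] \/ p = [:: a1; a2].
Proof.
case: p => [|e p] //=; case: e => [[|[|[|[|[|k]]]]] He] //=.
  by move/Wyy => ->; left; apply/eqP.
by move/Wxy => ->; right; apply/eqP.
Qed.
Lemma Wzz p : walk_from tl0 hd0 v3 v3 p -> p = [::].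
Proof. case: p => [|e p] //=; by case: e => [[|[|[|[|[|k]]]]] He]. Qed.
Lemma Wyz p : walk_from tl0 hd0 v2 v3 p -> p = [:: a3].
Proof.
case: p => [|e p] //=; case: e => [[|[|[|[|[|k]]]]] He] //=.
by move/Wzz => ->; apply/eqP.
Qed.
Lemma Wxz p : walk_from tl0 hd0 v1 v3 p -> p = [:: a2; a3] \/ p = [:: a4].
Proof.
case: p => [|e p] //=; case: e => [[|[|[|[|[|k]]]]] He] //=.
  by move/Wyz => ->; left; apply/eqP.
by move/Wzz => ->; right; apply/eqP.
Qed.

Lemma sX1 : X1 = [set e in [:: a1; a2]].
Proof. by apply/setP => e; rewrite !inE. Qed.
Lemma sY1 : Y1 = [set e in [:: a0]].
Proof. by apply/setP => e; rewrite !inE. Qed.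
Lemma sX2 : X2 = [set e in [:: a4]].
Proof. by apply/setP => e; rewrite !inE. Qed.
Lemma sY2 : Y2 = [set e in [:: a2; a3]].
Proof. by apply/setP => e; rewrite !inE. Qed.

Lemma pas1 : path_action_set tl0 hd0 v0 v2 [set X1; Y1].
Proof.
move=> P; split.
  rewrite !inE => /orP [] /eqP ->.
    by exists [:: a1; a2]; split; [|exact: sX1].
  by exists [:: a0]; split; [|exact: sY1].
move=> [p [/andP [hp _] ->]].
by case: (Wwy p hp) => ->; rewrite -?sX1 -?sY1 !inE eqxx ?orbT.
Qed.
Lemma pas2 : path_action_set tl0 hd0 v1 v3 [set X2; Y2].
Proof.
move=> P; split.
  rewrite !inE => /orP [] /eqP ->.
    by exists [:: a4]; split; [|exact: sX2].
  by exists [:: a2; a3]; split; [|exact: sY2].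
move=> [p [/andP [hp _] ->]].
by case: (Wxz p hp) => ->; rewrite -?sX2 -?sY2 !inE eqxx ?orbT.
Qed.

Lemma ratio_le (R : realType) (w1 w2 C m : R) :
  0 < w1 ^+ 2 + w2 ^+ 2 -> 0 < m ->
  (w1^+2 + w2^+2) * C <= (w1^+2 + w2^+2 + w1 * w2) * m ->
  C / m <= 1 + w1 * w2 / (w1 ^+ 2 + w2 ^+ 2).
Proof.
move=> hD hm hC.
rewrite ler_pdivrMr //.
set k := w1 * w2 / (w1 ^+ 2 + w2 ^+ 2).
have hk : w1 * w2 = k * (w1 ^+ 2 + w2 ^+ 2) by rewrite /k divfK // gt_eqF.
rewrite hk in hC.
nra.
Qed.

Lemma upper (R : realType) (w1 w2 : R) b y :
  0 <= w1 -> 0 <= w2 -> 0 < w1 ^+ 2 + w2 ^+ 2 ->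
  poa_values w1 w2 b y -> y <= 1 + w1 * w2 / (w1 ^+ 2 + w2 ^+ 2).
Proof.
move=> h1 h2 hD [T [alpha [beta [Acts1 [Acts2 [[hab _] [_ hp]]]]]]].
move: hp => [m [[[O1 [O2 [hO1 [hO2 hm]]]] _] [hm0 [[B1 [B2 [hspe ->]]] _]]]].
apply: ratio_le => //; rewrite -hm.
exact: (@spe_bound _ _ _ _ _ _ _ _ _ _ _ _ h1 h2 hab hspe hO1 hO2).
Qed.

Lemma attained (R : realType) (w1 w2 : R) b :
  0 <= w1 -> 0 <= w2 -> 0 < w1 ^+ 2 + w2 ^+ 2 ->
  poa_values w1 w2 b (1 + w1 * w2 / (w1 ^+ 2 + w2 ^+ 2)).
Proof.
move=> h1 h2 hD.
have hab : forall r, 0 <= alp w1 w2 r /\ 0 <= bet (R:=R) r.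
  move=> r; case: r => [[|[|[|[|[|k]]]]] Hr] //=; rewrite /alp /bet /=; split => //; lra.
exists ('I_5 : finType), (alp w1 w2), bet, [set X1; Y1], [set X2; Y2].
split; last split.
- split => //; split; apply/set0Pn.
    by exists X1; rewrite !inE eqxx.
  by exists X2; rewrite !inE eqxx.
- move=> _; exists ('I_4 : finType), tl0, hd0, v0, v2, v1, v3.
  by split; [exact: pas1 | exact: pas2].
have hne : (X1 == Y1) = false.
  apply/negbTE/eqP => H.
  have : a0 \in Y1 by rewrite /Y1 inE.
  by rewrite -H /X1 !inE.
have hY1 : Y1 \in [set X1; Y1] by rewrite !inE eqxx orbT.
have hY2 : Y2 \in [set X2; Y2] by rewrite !inE eqxx orbT.
have hX1 : X1 \in [set X1; Y1] by rewrite !inE eqxx.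
have hX2 : X2 \in [set X2; Y2] by rewrite !inE eqxx.
have hopt : is_opt (alp w1 w2) bet w1 w2 [set X1; Y1] [set X2; Y2] (w1 ^+ 2 + w2 ^+ 2).
  split.
    by exists Y1, Y2; rewrite /social_cost c17 c18.
  move=> A1 A2; rewrite !inE => /orP [] /eqP -> /orP [] /eqP ->;
    rewrite /social_cost ?c11 ?c12 ?c13 ?c14 ?c15 ?c16 ?c17 ?c18; nra.
have hspe : spe_outcome (alp w1 w2) bet w1 w2 [set X1; Y1] [set X2; Y2] X1 X2.
  exists (fun A => if A == Y1 then Y2 else X2).
  split; last split; last split; last split.
  - by move=> A1 _; case: ifP.
  - move=> A1 A2; rewrite !inE => /orP [] /eqP -> /orP [] /eqP ->;
      rewrite ?hne ?eqxx ?c11 ?c12 ?c13 ?c14 ?c15 ?c16 ?c17 ?c18; nra.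
  - exact: hX1.
  - move=> A1; rewrite !inE => /orP [] /eqP ->;
      rewrite ?hne ?eqxx ?c11 ?c12 ?c13 ?c14 ?c15 ?c16 ?c17 ?c18; nra.
  - by rewrite hne.
exists (w1 ^+ 2 + w2 ^+ 2); split => //; split => //; split.
  exists X1, X2; split => //.
  rewrite /social_cost c11 c12; field.
  by rewrite gt_eqF.
move=> B1 B2 hs.
apply: ratio_le => //.
have hb := (@spe_bound _ _ _ _ _ _ _ _ _ _ _ _ h1 h2 hab hs hY1 hY2).
have e : social_cost (alp w1 w2) bet w1 w2 Y1 Y2 = w1 ^+ 2 + w2 ^+ 2.
  by rewrite /social_cost c17 c18.
by rewrite e in hb.
Qed.

Theorem theorem7 (R : realType) (w1 w2 : R) :
  0 <= w1 -> 0 <= w2 -> 0 < w1 + w2 ->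
  is_sup (poa_values w1 w2 false) (1 + w1 * w2 / (w1 ^+ 2 + w2 ^+ 2)) /\
  is_sup (poa_values w1 w2 true) (1 + w1 * w2 / (w1 ^+ 2 + w2 ^+ 2)).
Proof.
move=> h1 h2 hw.
have hD : 0 < w1 ^+ 2 + w2 ^+ 2.
  have : 0 < (w1 + w2) ^+ 2 by rewrite exprn_gt0.
  nra.
split; split.
- by move=> y; apply: upper.
- by move=> z hz; apply: hz; apply: attained.
- by move=> y; apply: upper.
- by move=> z hz; apply: hz; apply: attained.
Qed.
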